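(* Let $S=S'aS''$ where $S',S''$ are words and the letter $a$ occurs in $S$ exactly once. Then a word $C$ is an s-cover of $S$ if and only if $C=C'aC''$ where $C'$ is an s-cover of $S'$ and $C''$ is an s-cover of $S''$.
   Context: For words $C,S$, $C$ is an \emph{s-cover} of $S$ if for every position $i$ of $S$ there exist indices $j_0<\dots<j_{|C|-1}$ with $S[j_t]=C[t]$ for all $t$ and $i\in\{j_0,\dots,j_{|C|-1}\}$; by this definition the empty word is an s-cover of the empty word, and the empty word is not an s-cover of any nonempty word unless... (only words whose positions all lie in occurrences count; a nonempty word's s-covers are nonempty). *)

(* Defs.v *)
From mathcomp Require Import all_boot.
Set Implicit Arguments. Unset Strict Implicit. Unset Printing Implicit Defensive.

(* [js] is an occurrence of [C] in [S]: a strictly increasing list of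
   positions j_0 < ... < j_{|C|-1} of S with S[j_t] = C[t]
   (onth S j = Some C[t] forces j < size S and |js| = |C|). *)
Definition occurrence (T : eqType) (C S : seq T) (js : seq nat) : Prop :=
  sorted ltn js /\ map (onth S) js = map Some C.

(* C is an s-cover of S: C occurs in S, and every position of S lies in
   some occurrence of C. (The first conjunct only matters for S empty:
   it makes the empty word the unique s-cover of the empty word.) *)
Definition s_cover (T : eqType) (C S : seq T) : Prop :=
  (exists js, occurrence C S js) /\
  forall i, i < size S -> exists js, occurrence C S js /\ i \in js.

(* Main.v *)
Require Import Defs.
From mathcomp Require Import all_boot.
From mathcomp Require Import zify.

Section Aux.
Variable T : eqType.

Lemma onth_lo (S' S'' : seq T) a j : j < size S' ->
  onth (S' ++ a :: S'') j = onth S' j.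
Proof. by move=> h; rewrite onth_cat h. Qed.

Lemma onth_mid (S' S'' : seq T) a :
  onth (S' ++ a :: S'') (size S') = Some a.
Proof. by rewrite onth_cat ltnn subnn. Qed.

Lemma onth_hi (S' S'' : seq T) a x :
  onth (S' ++ a :: S'') ((size S').+1 + x) = onth S'' x.
Proof.
rewrite onth_cat ltnNge (_ : size S' <= (size S').+1 + x) /=; last by lia.
by have -> : (size S').+1 + x - size S' = x.+1 by lia.
Qed.

Lemma occ_lt {C S : seq T} {js j} : map (onth S) js = map Some C -> j \in js ->
  j < size S.
Proof.
move=> E jin; have := map_f (onth S) jin; rewrite E => /mapP [x _ hx].
by rewrite -onthTE hx.
Qed.

Lemma ltn_add2l_rel k s : pairwise (relpre (addn k) ltn) s = pairwise ltn s.
Proof.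
have e : relpre (addn k) ltn =2 ltn by move=> x y /=; rewrite ltn_add2l.
exact: (eq_pairwise e s).
Qed.

Lemma comb (C' C'' S' S'' : seq T) a js1 js2 :
  occurrence C' S' js1 -> occurrence C'' S'' js2 ->
  occurrence (C' ++ a :: C'') (S' ++ a :: S'')
    (js1 ++ size S' :: map (addn (size S').+1) js2).
Proof.
move=> [s1 e1] [s2 e2]; split.
  move: s1 s2; rewrite !sorted_pairwise; try exact: ltn_trans.
  move=> s1 s2; rewrite pairwise_cat pairwise_cons pairwise_map s1.
  rewrite ltn_add2l_rel s2 !andbT; apply/andP; split.
    apply/allrelP => x y xin; rewrite inE => /orP [/eqP -> |].
      exact: (occ_lt e1 xin).
    move/mapP => [z _ ->]; have := (occ_lt e1 xin); lia.
  by apply/allP => y /mapP [z _ ->]; lia.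
rewrite !map_cat /= onth_mid -e1 -e2; congr (_ ++ _ :: _).
  by apply/eq_in_map => x xin; rewrite onth_lo //; exact: (occ_lt e1 xin).
rewrite -map_comp; apply: eq_map => x; exact: onth_hi.
Qed.

Lemma uniq_a {S' S'' : seq T} {a j} :
  count_mem a (S' ++ a :: S'') = 1 -> onth (S' ++ a :: S'') j = Some a ->
  j = size S'.
Proof.
rewrite count_cat /= eqxx => hc.
have h1 : count_mem a S' = 0 by lia.
have h2 : count_mem a S'' = 0 by lia.
rewrite onth_cat; case: ltngtP => hj.
- move=> ho; have : a \in S' by apply/onthP; exists j.
  by rewrite -has_pred1 has_count h1.
- have -> : j - size S' = (j - size S').-1.+1 by lia.
  move=> /= ho; have : a \in S'' by apply/onthP; exists (j - size S').-1.
  by rewrite -has_pred1 has_count h2.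
- by [].
Qed.

Lemma split_occ {C' C'' S' S'' : seq T} {a js} :
  count_mem a (S' ++ a :: S'') = 1 ->
  occurrence (C' ++ a :: C'') (S' ++ a :: S'') js ->
  exists js1 js2, js = js1 ++ size S' :: map (addn (size S').+1) js2 /\
    occurrence C' S' js1 /\ occurrence C'' S'' js2.
Proof.
move=> hc [so E].
have hs : size js = size (C' ++ a :: C'') by rewrite -(size_map (onth (S' ++ a :: S''))) E size_map.
have hk : size C' < size js by rewrite hs size_cat /=; lia.
rewrite -(cat_take_drop (size C') js) in so E.
case hd: (drop (size C') js) => [|j rest].
  by move: (size_drop (size C') js); rewrite hd /=; lia.
rewrite hd in so E.
move: E; rewrite !map_cat /= => /eqP; rewrite eqseq_cat; last first.
  by rewrite !size_map size_take hk.
case/andP => /eqP E1 /eqP [] /(uniq_a hc) hj E2; subst j.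
move: so; rewrite sorted_pairwise; last exact: ltn_trans.
rewrite pairwise_cat pairwise_cons => /and4P [hr p1 /allP hrest p2].
pose js2 := map (subn^~ (size S').+1) rest.
have hrest' : rest = map (addn (size S').+1) js2.
  rewrite -map_comp -[LHS]map_id; apply/eq_in_map => x xin /=.
  have := hrest x xin; lia.
have hlt : {in take (size C') js, forall x, x < size S'}.
  move=> x xin; by move/allrelP: hr => /(_ x (size S') xin); rewrite inE eqxx; apply.
exists (take (size C') js), js2; split; first by rewrite -hrest' -hd cat_take_drop.
split; split.
- by rewrite sorted_pairwise //; exact: ltn_trans.
- rewrite -E1; apply/esym/eq_in_map => x xin; exact: onth_lo (hlt x xin).
- move: p2; rewrite hrest' sorted_pairwise; last exact: ltn_trans.
  by rewrite pairwise_map ltn_add2l_rel.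
- rewrite -E2 hrest' -map_comp; apply: eq_map => x; exact/esym/onth_hi.
Qed.

End Aux.
Arguments split_occ {T C' C'' S' S'' a js}.
Arguments occ_lt {T C S js j}.

Theorem mainTheorem18 (T : eqType) (S' S'' C : seq T) (a : T) :
  count_mem a (S' ++ a :: S'') = 1 ->
  (s_cover C (S' ++ a :: S'') <->
   exists C' C'', C = C' ++ a :: C'' /\ s_cover C' S' /\ s_cover C'' S'').
Proof.
move=> hc; split.
  move=> [[js0 o0] cov].
  have [js [[so E] nin]] : exists js, occurrence C (S' ++ a :: S'') js /\ size S' \in js.
    by apply: cov; rewrite size_cat /=; lia.
  pose t := index (size S') js.
  have ht : t < size js by rewrite index_mem.
  have hs : size js = size C by rewrite -(size_map (onth (S' ++ a :: S''))) E size_map.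
  have hCt : nth a C t = a.
    have := congr1 (nth None ^~ t) E.
    rewrite (nth_map 0) // nth_index // onth_mid (nth_map a) -?hs //.
    by case.
  exists (take t C), (drop t.+1 C).
  have eC : C = take t C ++ a :: drop t.+1 C.
    by rewrite -hCt -drop_nth -?hs // cat_take_drop.
  split; first exact: eC.
  rewrite eC in o0 cov.
  have [js1 [js2 [_ [o1 o2]]]] := split_occ hc o0.
  split; split.
  - by exists js1.
  - move=> i hi; have [js' [o' iin]] := cov i ltac:(rewrite size_cat /=; lia).
    have [k1 [k2 [ej [ok1 ok2]]]] := split_occ hc o'.
    exists k1; split => //; move: iin; rewrite ej mem_cat inE => /or3P [//| /eqP|]; first lia.
    by move/mapP => [z _]; lia.
  - by exists js2.
  - move=> i hi; have [js' [o' iin]] := cov ((size S').+1 + i) ltac:(rewrite size_cat /=; lia).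
    have [k1 [k2 [ej [ok1 ok2]]]] := split_occ hc o'.
    exists k2; split => //; move: iin; rewrite ej mem_cat inE => /or3P [| /eqP|].
    + by move/(occ_lt (proj2 ok1)); lia.
    + lia.
    + by move/mapP => [z zin] /eqP; rewrite eqn_add2l => /eqP ->.
move=> [C' [C'' [-> [[[js1 o1] cov1] [[js2 o2] cov2]]]]].
split; first by exists (js1 ++ size S' :: map (addn (size S').+1) js2); exact: comb.
move=> i; rewrite size_cat /= => hi.
case: (ltngtP i (size S')) => h.
- have [k [ok ik]] := cov1 i h.
  exists (k ++ size S' :: map (addn (size S').+1) js2); split; first exact: comb.
  by rewrite mem_cat ik.
- have [k [ok ik]] := cov2 (i - (size S').+1) ltac:(lia).
  exists (js1 ++ size S' :: map (addn (size S').+1) k); split; first exact: comb.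
  rewrite mem_cat inE; apply/or3P; constructor 3; apply/mapP.
  by exists (i - (size S').+1) => //; lia.
- exists (js1 ++ size S' :: map (addn (size S').+1) js2); split; first exact: comb.
  by rewrite mem_cat inE h eqxx orbT.
Qed.
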